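(* Let $D$ be a small category, $\mathcal F$ a collection of $D$-orbits, and $X$ a (non-relative) $D$-cell complex of type $\mathcal F$. Then $X$ is a $D$-space of type $\mathcal F$.
   Context: A $D$-space is a functor $D\to\mathrm{Top}$; a $D$-orbit is a $D$-space whose colimit is a point; spaces are regarded as constant $D$-spaces. A $D$-cell structure of type $\mathcal F$ on $X$ consists of an ordinal $\lambda$ and $D$-spaces $X_\nu$ ($\nu\le\lambda$) with $X=X_\lambda$, such that for each successor $\mu+1\le\lambda$, $X_{\mu+1}$ is a pushout of $X_\mu\leftarrow S^{n-1}\times O_\mu\to D^n\times O_\mu$ for some $O_\mu\in\mathcal F$ and some $n\ge 0$ depending on $\mu$ ($S^{-1}=\emptyset$), and for limit ordinals $\nu$, $X_\nu=\operatorname{colim}_{\xi<\nu}X_\xi$. It is a (non-relative) $D$-cell complex if $X_0$ is the constant empty $D$-space. For $x\in\operatorname{colim}_D X$, the orbit $O_x$ is the pullback of $X\to\operatorname{colim}_D X$ along $\{x\}\hookrightarrow\operatorname{colim}_D X$; $X$ is of type $\mathcal F$ if $O_x\in\mathcal F$ for every $x\in\operatorname{colim}_D X$ (orbits considered up to isomorphism). *)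

(* Defs.v *)
From HB Require Import structures.
From mathcomp Require Import all_boot all_order all_algebra.
From mathcomp Require Import all_classical all_reals.
From mathcomp Require Import topology matrix_topology subtype_topology.
From mathcomp Require Import Rstruct Rstruct_topology.
Import Order.TTheory GRing.Theory Num.Theory.

Set Implicit Arguments.
Unset Strict Implicit.
Unset Printing Implicit Defensive.

Local Open Scope classical_set_scope.
Local Open Scope ring_scope.

Record Cat := {
  Ob :> Type;
  Hom : Ob -> Ob -> Type;
  cid : forall a, Hom a a;
  ccomp : forall a b c, Hom b c -> Hom a b -> Hom a c;
  ccomp_idl : forall a b (f : Hom a b), ccomp (cid b) f = f;
  ccomp_idr : forall a b (f : Hom a b), ccomp f (cid a) = f;
  ccompA : forall a b c d (h : Hom c d) (g : Hom b c) (f : Hom a b),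
      ccomp h (ccomp g f) = ccomp (ccomp h g) f }.
Arguments cid {_} a.
Arguments ccomp {C a b c} _ _ : rename.

Unset Implicit Arguments.
Record DSpace (D : Cat) := {
  dsp :> Ob D -> topologicalType;
  dact : forall a b, Hom a b -> dsp a -> dsp b;
  dact_cont : forall a b (f : Hom a b), continuous (dact a b f);
  dact_id : forall a (x : dsp a), dact a a (cid a) x = x;
  dact_comp : forall a b c (g : Hom b c) (f : Hom a b) (x : dsp a),
      dact a c (ccomp g f) x = dact b c g (dact a b f x) }.
Arguments dact {D} X {a b} f x : rename.
Arguments dsp {D} X a : rename.

Record DMap (D : Cat) (X Y : DSpace D) := {
  dmap :> forall a, X a -> Y a;
  dmap_cont : forall a : Ob D, continuous (dmap a);
  dmap_nat : forall (a b : Ob D) (f : Hom a b) (x : X a),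
      dmap b (dact X f x) = dact Y f (dmap a x) }.
Arguments DMap {D} X Y.
Arguments dmap {D X Y} m a x : rename.
Set Implicit Arguments.

Definition dcommutes (D : Cat) (X Y Z : DSpace D)
  (f : DMap X Y) (g : DMap Y Z) (h : DMap X Z) : Prop :=
  forall a (x : X a), g a (f a x) = h a x.

Definition dmap_eq (D : Cat) (X Y : DSpace D) (f g : DMap X Y) : Prop :=
  forall a (x : X a), f a x = g a x.

Definition diso (D : Cat) (X Y : DSpace D) : Prop :=
  exists (f : DMap X Y) (g : DMap Y X),
    (forall a (x : X a), g a (f a x) = x) /\
    (forall a (y : Y a), f a (g a y) = y).

Definition IsDPushout (D : Cat) (A B C P : DSpace D)
  (f : DMap A B) (g : DMap A C) (i : DMap B P) (j : DMap C P) : Prop :=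
  (forall a (x : A a), i a (f a x) = j a (g a x)) /\
  forall (Q : DSpace D) (u : DMap B Q) (v : DMap C Q),
    (forall a (x : A a), u a (f a x) = v a (g a x)) ->
    exists w : DMap P Q,
      dcommutes i w u /\ dcommutes j w v /\
      forall w' : DMap P Q, dcommutes i w' u -> dcommutes j w' v ->
        dmap_eq w' w.

Definition IsTopColimit (D : Cat) (X : DSpace D) (C : topologicalType)
  (c : forall a, X a -> C) : Prop :=
  (forall a : Ob D, continuous (c a)) /\
  (forall a b (f : Hom a b) (x : X a), c b (dact X f x) = c a x) /\
  forall (Y : topologicalType) (g : forall a, X a -> Y),
    (forall a : Ob D, continuous (g a)) ->
    (forall a b (f : Hom a b) (x : X a), g b (dact X f x) = g a x) ->
    exists h : C -> Y, continuous h /\ (forall a x, h (c a x) = g a x) /\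
      forall h' : C -> Y, continuous h' -> (forall a x, h' (c a x) = g a x) ->
        forall z, h' z = h z.

Definition DOrbit (D : Cat) (O : DSpace D) : Prop :=
  exists (C : topologicalType) (c : forall a, O a -> C),
    IsTopColimit c /\ exists pt : C, forall z : C, z = pt.

(** [P] (with [p : P -> X]) is the pullback of [X -> const (colim X)] along
    [{x} -> colim X], i.e. the orbit [O_x]. The map from P to the constant
    one-point D-space is unique, so the universal property reduces to: *)
Definition IsOrbitAt (D : Cat) (X : DSpace D) (C : topologicalType)
  (c : forall a, X a -> C) (x : C) (P : DSpace D) (p : DMap P X) : Prop :=
  (forall a (y : P a), c a (p a y) = x) /\
  forall (Q : DSpace D) (q : DMap Q X),
    (forall a (y : Q a), c a (q a y) = x) ->
    exists u : DMap Q P, dcommutes u p q /\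
      forall u' : DMap Q P, dcommutes u' p q -> dmap_eq u' u.

Definition DSpace_of_type (D : Cat) (F : DSpace D -> Prop) (X : DSpace D)
  : Prop :=
  forall (C : topologicalType) (c : forall a, X a -> C), IsTopColimit c ->
  forall (x : C) (P : DSpace D) (p : DMap P X), IsOrbitAt c x p ->
    exists O, F O /\ diso P O.

Definition sqnorm (n : nat) (v : 'rV[Rdefinitions.R]_n) : Rdefinitions.R := \sum_(i < n) v ord0 i ^+ 2.
Definition disk_set (n : nat) : set 'rV[Rdefinitions.R]_n := [set v | sqnorm v <= 1].
Definition sphere_set (n : nat) : set 'rV[Rdefinitions.R]_n := [set v | sqnorm v = 1].
(** D^n and S^(n-1) with the subspace topology of R^n (S^(-1) is empty). *)
Definition Disk (n : nat) : topologicalType := set_type (@disk_set n).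
Definition Sphere (n : nat) : topologicalType := set_type (@sphere_set n).

Lemma sphere_in_disk (n : nat) (v : 'rV[Rdefinitions.R]_n) : @sphere_set n v -> @disk_set n v.
Proof. by rewrite /sphere_set /disk_set /= => ->. Qed.

Definition sphere_incl (n : nat) (s : Sphere n) : Disk n :=
  SigSub (mem_set (sphere_in_disk (set_mem (valP s)))).

Lemma sphere_incl_cont (n : nat) : continuous (@sphere_incl n).
Proof.
apply: continuous_comp_initial.
exact: (@initial_continuous _ _ (@set_val _ (@sphere_set n))).
Qed.

Lemma pair_map_cont (T U V : topologicalType) (h : U -> V) :
  continuous h -> continuous (fun p : T * U => (p.1, h p.2)).
Proof.
move=> hc [t o] W /= [[A B]] /= [At Bho] ABW.
exists (A, h @^-1` B); first by split => //; exact: hc.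
by case=> y z /= [Ay Bz]; exact: ABW.
Qed.

Definition prodDSpace (D : Cat) (T : topologicalType) (O : DSpace D)
  : DSpace D.
refine {| dsp := fun a => (T * O a)%type : topologicalType;
          dact := fun a b f p => (p.1, dact O f p.2) |}.
- by move=> a b f; apply: pair_map_cont; exact: dact_cont.
- by move=> a [t o] /=; rewrite dact_id.
- by move=> a b c g f [t o] /=; rewrite dact_comp.
Defined.

Definition cell_incl (D : Cat) (n : nat) (O : DSpace D)
  : DMap (prodDSpace (Sphere n) O) (prodDSpace (Disk n) O).
refine (@Build_DMap D (prodDSpace (Sphere n) O) (prodDSpace (Disk n) O)
  (fun (a : Ob D) (p : (Sphere n * O a)%type) =>
     ((sphere_incl p.1, p.2) : (Disk n * O a)%type)) _ _).
- move=> a [s o] W /= [[A B]] /= [As Bo] ABW.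
  exists (@sphere_incl n @^-1` A, B); first by split => //; exact: sphere_incl_cont.
  by case=> y z /= [Ay Bz]; exact: ABW.
- by [].
Defined.

(** * Ordinals: [lambda + 1 = {nu | nu <= lambda}] is represented by a type
    with a well-founded strict total order having a greatest element. *)
Record OrdinalSeg := {
  oidx :> Type;
  olt : oidx -> oidx -> Prop;
  olt_wf : well_founded olt;
  olt_trans : forall x y z, olt x y -> olt y z -> olt x z;
  olt_irrefl : forall x, ~ olt x x;
  olt_total : forall x y, olt x y \/ x = y \/ olt y x;
  otop : oidx;
  otop_max : forall x, x = otop \/ olt x otop }.

Definition ole (L : OrdinalSeg) (x y : L) : Prop := olt x y \/ x = y.
Definition ois_zero (L : OrdinalSeg) (x : L) : Prop := forall y, ~ olt y x.
Definition ois_succ (L : OrdinalSeg) (m n : L) : Prop :=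
  olt m n /\ forall y, ~ (olt m y /\ olt y n).
Definition ois_limit (L : OrdinalSeg) (n : L) : Prop :=
  ~ ois_zero n /\ forall m, ~ ois_succ m n.

Record DCellComplex (D : Cat) (F : DSpace D -> Prop) := {
  cc_ord : OrdinalSeg;
  cc_sp : cc_ord -> DSpace D;
  cc_map : forall m n : cc_ord, ole m n -> DMap (cc_sp m) (cc_sp n);
  cc_map_id : forall (m : cc_ord) (h : ole m m) a (x : cc_sp m a),
      cc_map h a x = x;
  cc_map_comp : forall (l m n : cc_ord) (h1 : ole l m) (h2 : ole m n)
      (h3 : ole l n), dcommutes (cc_map h1) (cc_map h2) (cc_map h3);
  cc_zero : forall m : cc_ord, ois_zero m -> forall a, cc_sp m a -> False;
  cc_succ : forall (m n : cc_ord) (hs : ois_succ m n) (h : ole m n),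
      exists (O : DSpace D) (k : nat)
        (phi : DMap (prodDSpace (Sphere k) O) (cc_sp m))
        (j : DMap (prodDSpace (Disk k) O) (cc_sp n)),
        F O /\ IsDPushout phi (cell_incl k O) (cc_map h) j;
  cc_limit : forall (n : cc_ord), ois_limit n ->
      forall (Y : DSpace D) (g : forall m : cc_ord, olt m n -> DMap (cc_sp m) Y),
        (forall (m m' : cc_ord) (hm : olt m n) (hm' : olt m' n)
           (h : ole m m'), dcommutes (cc_map h) (g m' hm') (g m hm)) ->
        exists w : DMap (cc_sp n) Y,
          (forall (m : cc_ord) (hm : olt m n) (h : ole m n),
              dcommutes (cc_map h) w (g m hm)) /\
          forall w' : DMap (cc_sp n) Y,
            (forall (m : cc_ord) (hm : olt m n) (h : ole m n),
                dcommutes (cc_map h) w' (g m hm)) -> dmap_eq w' w }.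

Definition cc_space (D : Cat) (F : DSpace D -> Prop) (X : DCellComplex F)
  : DSpace D := @cc_sp D F X (otop (cc_ord X)).

(* Main.v *)
From HB Require Import structures.
From mathcomp Require Import all_boot all_order all_algebra.
From mathcomp Require Import all_classical all_reals.
From mathcomp Require Import topology matrix_topology subtype_topology.
From mathcomp Require Import Rstruct Rstruct_topology.
From mathcomp Require Import normedtype matrix_normedtype realfun.
Require Import Defs.
Import Order.TTheory GRing.Theory Num.Theory.
Import numFieldNormedType.Exports.
Unset Strict Implicit.
Unset Printing Implicit Defensive.
Local Open Scope classical_set_scope.
Local Open Scope ring_scope.
Local Notation RR := Rdefinitions.R.

Set Implicit Arguments.

Definition indisc (T : Type) : Type := T.
HB.instance Definition _ (T : Type) := gen_eqMixin (indisc T).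
HB.instance Definition _ (T : Type) := gen_choiceMixin (indisc T).

Definition indisc_op (T : Type) : set_system (indisc T) :=
  fun A => A = setT \/ A = set0.

Lemma indisc_opT (T : Type) : @indisc_op T setT. Proof. by left. Qed.
Lemma indisc_opI (T : Type) : setI_closed (@indisc_op T).
Proof.
move=> A B [->|->] [->|->]; rewrite ?setIT ?setTI ?set0I ?setI0;
  by [left|right].
Qed.
Lemma indisc_opU (T : Type) (I : Type) (f : I -> set (indisc T)) :
  (forall i, indisc_op (f i)) -> indisc_op (\bigcup_i f i).
Proof.
move=> H.
case: (pselect (exists i, f i = setT)) => [[i fi]|nf].
  left; apply/seteqP; split => // x _; exists i => //; by rewrite fi.
right; apply/seteqP; split => // x [i _ hx].
have [fiT|fi0] := H i; first by exfalso; apply: nf; exists i.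
by rewrite fi0 in hx.
Qed.
Definition indisc_mixin (T : Type) :=
  @isOpenTopological.Build (indisc T) (@indisc_op T) (@indisc_opT T) (@indisc_opI T) (@indisc_opU T).
HB.instance Definition _ (T : Type) := indisc_mixin T.

Lemma indisc_cont (S : topologicalType) (T : Type) (f : S -> indisc T) :
  continuous f.
Proof.
apply/continuousP => A [->|->]; rewrite ?preimage_setT ?preimage_set0.
  exact: openT. exact: open0.
Qed.

(* option with an extra "generic" point None *)
Definition optT (Z : topologicalType) : Type := option Z.
HB.instance Definition _ (Z : topologicalType) := Choice.on (optT Z).

Definition opt_op (Z : topologicalType) : set_system (optT Z) :=
  fun A => A = setT \/ (~ A None /\ open [set z : Z | A (Some z)]).

Lemma opt_opT (Z : topologicalType) : @opt_op Z setT. Proof. by left. Qed.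
Lemma opt_opI (Z : topologicalType) : setI_closed (@opt_op Z).
Proof.
move=> A B [->|[nA oA]] [->|[nB oB]].
- by left; rewrite setIT.
- by right; rewrite setTI.
- by right; rewrite setIT.
right; split; first by case.
exact: openI.
Qed.
Lemma opt_opU (Z : topologicalType) (I : Type) (f : I -> set (optT Z)) :
  (forall i, opt_op (f i)) -> opt_op (\bigcup_i f i).
Proof.
move=> H.
case: (pselect (exists i, f i = setT)) => [[i fi]|nf].
  left; apply/seteqP; split => // x _; exists i => //; by rewrite fi.
right; split.
  move=> [i _ fiN]; have [fiT|[nfi _]] := H i; last by [].
  by apply: nf; exists i.
have -> : [set z : Z | (\bigcup_i f i) (Some z)] =
   \bigcup_i [set z : Z | f i (Some z)].
  by apply/seteqP; split => z [i _ h]; exists i.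
apply: bigcup_open => i _.
have [fiT|[_ ?]] := H i => //.
by rewrite fiT; exact: openT.
Qed.
Definition opt_mixin (Z : topologicalType) :=
  @isOpenTopological.Build (optT Z) (@opt_op Z) (@opt_opT Z) (@opt_opI Z) (@opt_opU Z).
HB.instance Definition _ (Z : topologicalType) := opt_mixin Z.

Lemma opt_openP (Z : topologicalType) (A : set (optT Z)) :
  open A <-> (A = setT \/ (~ A None /\ open [set z : Z | A (Some z)])).
Proof. by []. Qed.

Lemma opt_contP (S : topologicalType) (Z : topologicalType) (f : S -> optT Z) :
  (forall V : set Z, open V -> open [set s | exists2 z, f s = Some z & V z]) ->
  continuous f.
Proof.
move=> H; apply/continuousP => A [->|[nA oA]]; first by rewrite preimage_setT; exact: openT.
have := H _ oA; congr open; apply/seteqP; split => s /=.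
  by case=> z -> .
by case E : (f s) => [z|] h; [exists z|].
Qed.

Lemma Some_cont (Z : topologicalType) : continuous (Some : Z -> optT Z).
Proof.
apply: opt_contP => V oV; congr open: oV; apply/seteqP; split => z /=.
  by move=> Vz; exists z.
by case=> z' [->].
Qed.

Unset Implicit Arguments.

Lemma sig_eq {T : Type} {P : T -> Prop} {x y : T} {hx : P x} {hy : P y} :
  x = y -> exist P x hx = exist P y hy.
Proof. by move=> exy; subst y; congr exist; exact: Prop_irrelevance. Qed.

Lemma natD {D : Cat} {X Y : DSpace D} (m : DMap X Y) {a b : D} (f : Hom a b) x :
  m b (dact X f x) = dact Y f (m a x).
Proof. exact: dmap_nat. Qed.
Lemma actid {D : Cat} (X : DSpace D) {a : D} (x : X a) : dact X (cid a) x = x.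
Proof. exact: dact_id. Qed.
Lemma actcomp {D : Cat} (X : DSpace D) {a b c : D} (g : Hom b c) (f : Hom a b) x :
  dact X (ccomp g f) x = dact X g (dact X f x).
Proof. exact: dact_comp. Qed.

Section DS.
Variable D : Cat.

Definition mkIndDS (T : Ob D -> Type) (act : forall a b, Hom a b -> T a -> T b)
  (aid : forall a x, act a a (cid a) x = x)
  (acomp : forall a b c (g : Hom b c) (f : Hom a b) x,
     act a c (ccomp g f) x = act b c g (act a b f x)) : DSpace D :=
  @Build_DSpace D (fun a => (indisc (T a) : topologicalType)) act
     (fun a b f => @indisc_cont _ _ _) aid acomp.

Definition indDS (X : DSpace D) : DSpace D :=
  @mkIndDS (fun a => X a) (fun a b f => dact X f) (@dact_id D X) (@dact_comp D X).

Section Sub.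
Variables (X : DSpace D) (S : forall a, X a -> Prop)
  (hS : forall a b (f : Hom a b) x, S a x -> S b (dact X f x)).

Definition subT a := {x : X a | S a x}.
Definition subact a b (f : Hom a b) (p : subT a) : subT b :=
  exist _ (dact X f (proj1_sig p)) (hS a b f _ (proj2_sig p)).
Lemma subact_id a x : subact a a (cid a) x = x.
Proof. by case: x => x h; rewrite /subact /=; apply: sig_eq; rewrite actid. Qed.
Lemma subact_comp a b c (g : Hom b c) (f : Hom a b) x :
  subact a c (ccomp g f) x = subact b c g (subact a b f x).
Proof. by case: x => x h; rewrite /subact /=; apply: sig_eq; rewrite actcomp. Qed.
Definition subDS : DSpace D := @mkIndDS subT subact subact_id subact_comp.
End Sub.

Definition mkIndMap (X : DSpace D) (T : Ob D -> Type) act aid acomp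
  (m : forall a, X a -> T a)
  (hn : forall a b (f : Hom a b) x, m b (dact X f x) = act a b f (m a x)) :
  DMap X (@mkIndDS T act aid acomp) :=
  @Build_DMap D X (@mkIndDS T act aid acomp) m (fun a => @indisc_cont _ _ _) hn.

Lemma po_surj (A B C P : DSpace D) (f : DMap A B) (g : DMap A C)
  (i : DMap B P) (j : DMap C P) : IsDPushout f g i j ->
  forall a y, (exists z, y = i a z) \/ (exists w, y = j a w).
Proof.
move=> [com univ].
pose S a (y : P a) := (exists z, y = i a z) \/ (exists w, y = j a w).
have hS : forall a b (h : Hom a b) x, S a x -> S b (dact P h x).
  move=> a b h x [[z ->]|[w ->]]; [left; exists (dact B h z)|right; exists (dact C h w)];
  by rewrite natD.
pose u := @mkIndMap B _ _ (subact_id P S hS) (subact_comp P S hS)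
  (fun a z => exist _ (i a z) (or_introl (ex_intro _ z erefl)))
  (fun a b h x => sig_eq (natD i h x)).
pose v := @mkIndMap C _ _ (subact_id P S hS) (subact_comp P S hS)
  (fun a z => exist _ (j a z) (or_intror (ex_intro _ z erefl)))
  (fun a b h x => sig_eq (natD j h x)).
have [w [wu [wv _]]] := univ _ u v (fun a x => sig_eq (com a x)).
pose i' := @mkIndMap B (fun a => P a) (fun a b h => dact P h) (fun a => @dact_id D P a)
  (fun a b c => @dact_comp D P a b c) (fun a => i a) (fun a b h x => natD i h x).
pose j' := @mkIndMap C (fun a => P a) (fun a b h => dact P h) (fun a => @dact_id D P a)
  (fun a b c => @dact_comp D P a b c) (fun a => j a) (fun a b h x => natD j h x).
have [w0 [_ [_ uniq]]] := univ _ i' j' com.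
pose m1 := @mkIndMap P (fun a => P a) (fun a b h => dact P h) (fun a => @dact_id D P a)
  (fun a b c => @dact_comp D P a b c) (fun a y => y) (fun a b h x => erefl).
have nm2 : forall a b (h : Hom a b) x,
  proj1_sig (w b (dact P h x)) = dact P h (proj1_sig (w a x)).
  by move=> a b h x; rewrite natD.
pose m2 := @mkIndMap P (fun a => P a) (fun a b h => dact P h) (fun a => @dact_id D P a)
  (fun a b c => @dact_comp D P a b c) (fun a y => proj1_sig (w a y)) nm2.
have e1 := uniq m1 (fun a x => erefl) (fun a x => erefl).
have e2 : dmap_eq m2 w0.
  apply: uniq => a x /=; [by rewrite wu | by rewrite wv].
move=> a y; have : y = proj1_sig (w a y).
  by transitivity (w0 a y); [exact: (e1 a y) | symmetry; exact: (e2 a y)].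
move=> E; rewrite E; exact: (proj2_sig (w a y)).
Qed.

Lemma colim_surj (X : DSpace D) (C : topologicalType) (c : forall a, X a -> C) :
  IsTopColimit c -> forall z : C, exists a x, z = c a x.
Proof.
move=> [cc [ccomp univ]].
have [h [_ [hc uniq]]] := univ (indisc C : topologicalType) (fun a x => c a x)
  (fun a => @indisc_cont _ _ _) ccomp.
pose T := {z : C | exists a x, z = c a x}.
have [h2 [_ [h2c _]]] := univ (indisc T : topologicalType)
  (fun a x => exist _ (c a x) (ex_intro _ a (ex_intro _ x erefl)))
  (fun a => @indisc_cont _ _ _)
  (fun a b f x => sig_eq (ccomp a b f x)).
have e1 := uniq (fun z : C => (z : indisc C)) (@indisc_cont _ _ _) (fun a x => erefl).
have e2 := uniq (fun z : C => (proj1_sig (h2 z) : indisc C)) (@indisc_cont _ _ _)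
  (fun a x => f_equal (@proj1_sig _ _) (h2c a x)).
move=> z; have E : z = proj1_sig (h2 z).
  by transitivity (h z); [exact: (e1 z) | symmetry; exact: (e2 z)].
rewrite E; exact: (proj2_sig (h2 z)).
Qed.
End DS.

Section Ord.
Variable L : OrdinalSeg.
Lemma ole_refl (m : L) : ole m m. Proof. by right. Qed.
Lemma ole_trans (l m n : L) : ole l m -> ole m n -> ole l n.
Proof.
move=> [h1|->] [h2|<-]; by [left; exact: olt_trans h1 h2 | left | left | right].
Qed.
Lemma olt_ole (m n : L) : olt m n -> ole m n. Proof. by left. Qed.
Lemma olt_ole_trans (l m n : L) : olt l m -> ole m n -> olt l n.
Proof. by move=> h1 [h2|<-] //; exact: olt_trans h1 h2. Qed.
Lemma ole_olt_trans (l m n : L) : ole l m -> olt m n -> olt l n.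
Proof. by move=> [h1|->] h2 //; exact: olt_trans h1 h2. Qed.
Lemma olt_nle (m n : L) : olt m n -> ~ ole n m.
Proof.
move=> h [h'|e]; first exact: (olt_irrefl (olt_trans h h')).
by subst; exact: (olt_irrefl h).
Qed.
Lemma succ_pred_uniq (m m' n : L) : ois_succ m n -> ois_succ m' n -> m = m'.
Proof.
move=> [h1 s1] [h2 s2]; have [h|[//|h]] := olt_total m m'.
  by exfalso; apply: (s1 m'); split.
by exfalso; apply: (s2 m); split.
Qed.
Lemma succ_le (m n k : L) : ois_succ m n -> olt k n -> ole k m.
Proof.
move=> [h s] hk; have [h'|[e|h']] := olt_total k m; [by left|by right|].
by exfalso; apply: (s k); split.
Qed.
Lemma trichotomy (n : L) :
  ois_zero n \/ (exists m, ois_succ m n) \/ ois_limit n.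
Proof.
case: (pselect (ois_zero n)) => hz; first by left.
case: (pselect (exists m, ois_succ m n)) => hs; first by right; left.
right; right; split => // m hm; apply: hs; by exists m.
Qed.
End Ord.

Section Cells.
Variables (D : Cat) (F : DSpace D -> Prop) (X : DCellComplex F).
Local Notation L := (cc_ord X).
Local Notation sp n := (@cc_sp D F X n).
Local Notation iota h := (@cc_map D F X _ _ h).

Lemma iota_comp (l m n : L) (h1 : ole l m) (h2 : ole m n) (h3 : ole l n) a x :
  iota h2 a (iota h1 a x) = iota h3 a x.
Proof. exact: cc_map_comp. Qed.
Lemma iota_id (m : L) (h : ole m m) a x : iota h a x = x.
Proof. exact: cc_map_id. Qed.
Lemma iota_pi (m n : L) (h h' : ole m n) a x : iota h a x = iota h' a x.
Proof. by rewrite (Prop_irrelevance h h'). Qed.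

Record celldata (m n : L) := CD {
  cO : DSpace D; ck : nat;
  cphi : DMap (prodDSpace (Sphere ck) cO) (sp m);
  cj : DMap (prodDSpace (Disk ck) cO) (sp n);
  cF : F cO;
  cPO : forall h : ole m n, IsDPushout cphi (cell_incl ck cO) (iota h) cj }.

Definition cd (m n : L) (hs : ois_succ m n) : celldata m n.
Proof.
have h0 : ole m n := or_introl (proj1 hs).
have E := cc_succ hs h0.
case: (boolp.cid E) => O E1. case: (boolp.cid E1) => k E2.
case: (boolp.cid E2) => phi E3. case: (boolp.cid E3) => j [FO PO].
apply: (@CD m n O k phi j FO) => h. by rewrite (Prop_irrelevance h h0).
Defined.

Definition inner {k : nat} (v : Disk k) : Prop := sqnorm (\val v) < 1.

Definition incell (n : L) (b : D) (y : sp n b) : Prop :=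
  exists (nu nu1 : L) (hs : ois_succ nu nu1) (h : ole nu1 n)
    (v : Disk (ck _ _ (cd nu nu1 hs))) (o : cO _ _ (cd nu nu1 hs) b),
    inner v /\ y = iota h b (cj _ _ (cd nu nu1 hs) b (v, o)).

Lemma lim_surj (n : L) : ois_limit n -> forall b (y : sp n b),
  exists m (hm : olt m n) z, y = iota (or_introl hm) b z.
Proof.
move=> hl.
pose S a (y : sp n a) := exists m (hm : olt m n) z, y = iota (or_introl hm) a z.
have hS : forall a b (h : Hom a b) x, S a x -> S b (dact (sp n) h x).
  move=> a b h x [m [hm [z ->]]]; exists m, hm, (dact (sp m) h z).
  by rewrite natD.
pose g m (hm : olt m n) := @mkIndMap D (sp m) _ _ (subact_id D (sp n) S hS)
  (subact_comp D (sp n) S hS)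
  (fun a z => exist _ (iota (or_introl hm) a z)
      (ex_intro _ m (ex_intro _ hm (ex_intro _ z erefl))))
  (fun a b h x => sig_eq (natD (iota (or_introl hm)) h x)).
have gc : forall (m m' : L) (hm : olt m n) (hm' : olt m' n) (h : ole m m'),
   dcommutes (iota h) (g m' hm') (g m hm).
  move=> m m' hm hm' h a x; rewrite /g /=; apply: sig_eq; exact: iota_comp.
have [w [wc _]] := cc_limit hl gc.
pose g' m (hm : olt m n) := @mkIndMap D (sp m) (fun a => sp n a)
  (fun a b h => dact (sp n) h) (fun a => @dact_id D (sp n) a)
  (fun a b c => @dact_comp D (sp n) a b c) (fun a => iota (or_introl hm) a)
  (fun a b h x => natD (iota (or_introl hm)) h x).
have gc' : forall (m m' : L) (hm : olt m n) (hm' : olt m' n) (h : ole m m'),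
   dcommutes (iota h) (g' m' hm') (g' m hm).
  move=> m m' hm hm' h a x /=; exact: iota_comp.
have [w0 [_ uniq]] := cc_limit hl gc'.
pose m1 := @mkIndMap D (sp n) (fun a => sp n a) (fun a b h => dact (sp n) h)
  (fun a => @dact_id D (sp n) a) (fun a b c => @dact_comp D (sp n) a b c)
  (fun a y => y) (fun a b h x => erefl).
have nm2 : forall a b (h : Hom a b) x,
  proj1_sig (w b (dact (sp n) h x)) = dact (sp n) h (proj1_sig (w a x)).
  by move=> a b h x; rewrite natD.
pose m2 := @mkIndMap D (sp n) (fun a => sp n a) (fun a b h => dact (sp n) h)
  (fun a => @dact_id D (sp n) a) (fun a b c => @dact_comp D (sp n) a b c)
  (fun a y => proj1_sig (w a y)) nm2.
have e1 := uniq m1 (fun m hm h a x => iota_pi _ _ h (or_introl hm) a x).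
have e2 : dmap_eq m2 w0.
  apply: uniq => m hm h a x /=; rewrite (wc m hm h a x) /=; exact: iota_pi.
move=> a y; have E : y = proj1_sig (w a y).
  by transitivity (w0 a y); [exact: (e1 a y) | symmetry; exact: (e2 a y)].
rewrite E; exact: (proj2_sig (w a y)).
Qed.

Lemma incell_lift (m n : L) (h : ole m n) b (z : sp m b) :
  incell m b z -> incell n b (iota h b z).
Proof.
move=> [nu [nu1 [hs [h' [v [o [iv ->]]]]]]].
exists nu, nu1, hs, (ole_trans _ _ _ _ h' h), v, o; split => //; exact: iota_comp.
Qed.

Lemma not_inner_sphere k (v : Disk k) : ~ inner v -> exists s : Sphere k, sphere_incl s = v.
Proof.
case: v => x hx ni.
have hv : sqnorm x <= 1 := set_mem hx.
have e : sqnorm x = 1.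
  apply/eqP; rewrite eq_le hv /= leNgt; apply/negP => h; exact: ni h.
exists (SigSub (mem_set (e : sphere_set x))).
by apply: sig_eq.
Qed.

Lemma decomp (n : L) b (y : sp n b) : incell n b y.
Proof.
move: b y; elim/(well_founded_ind (@olt_wf L)): n => n IH b y.
have [hz|[[m hs]|hl]] := trichotomy L n.
- by exfalso; exact: (cc_zero hz y).
- pose c := cd m n hs; have h0 : ole m n := or_introl (proj1 hs).
  have lift : forall z, incell n b (iota h0 b z).
    move=> z; apply: incell_lift; exact: IH (proj1 hs) b z.
  have [[z ->]|[[v o] ->]] := po_surj D _ _ _ _ _ _ _ _ (cPO m n c h0) b y.
    exact: lift.
  case: (pselect (inner v)) => iv.
    exists m, n, hs, (ole_refl L n), v, o; split => //; by rewrite iota_id.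
  have [s <-] := not_inner_sphere _ v iv.
  have := (proj1 (cPO m n c h0)) b (s, o); rewrite /= => <-; exact: lift.
- have [m [hm [z ->]]] := lim_surj n hl b y.
  apply: incell_lift; exact: IH hm b z.
Qed.
End Cells.

Lemma omap_cont (Z1 Z2 : topologicalType) (g : Z1 -> Z2) :
  continuous g -> continuous (omap g : optT Z1 -> optT Z2).
Proof.
move=> gc; apply: opt_contP => V oV.
apply/opt_openP; right; split; first by case.
have -> : [set z : Z1 | [set s : optT Z1 | exists2 z0, omap g s = Some z0 & V z0] (Some z)]
  = g @^-1` V.
  apply/seteqP; split => z /=; first by case=> z0 [<-].
  by move=> Vz; exists (g z).
by move/continuousP: gc; apply.
Qed.

Lemma sqnorm_cont (n : nat) : continuous (@sqnorm n).
Proof.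
have H : forall s : seq 'I_n,
  continuous (fun v : 'rV[RR]_n => \big[+%R/0]_(i <- s) v ord0 i ^+ 2).
  elim=> [|i s IH].
    have -> : (fun v : 'rV[RR]_n => \big[+%R/0]_(i <- [::]) v ord0 i ^+ 2) = fun _ => 0.
      by apply: funext => w; rewrite big_nil.
    exact: cst_continuous.
  have -> : (fun v : 'rV[RR]_n => \big[+%R/0]_(j <- i :: s) v ord0 j ^+ 2) =
     (fun v : 'rV[RR]_n => v ord0 i * v ord0 i) + (fun v : 'rV[RR]_n => \big[+%R/0]_(j <- s) v ord0 j ^+ 2).
    by apply: funext => w; rewrite big_cons expr2.
  move=> v.
  have h1 : (fun w : 'rV[RR]_n => w ord0 i) @ v --> v ord0 i.
    exact: (@coord_continuous RR 1 n ord0 i v).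
  have := cvgD (cvgM h1 h1) (IH v).
  move=> H; exact: (H (nbhs_filter v) (nbhs_filter v)).
exact: H.
Qed.

Lemma nbhsW {T : topologicalType} {x : T} {P Q : set T} :
  nbhs x P -> P `<=` Q -> nbhs x Q.
Proof. by move=> h s; exact: (@filterS _ _ (nbhs_filter x) _ _ s h). Qed.
Lemma nbhsI {T : topologicalType} {x : T} {P Q : set T} :
  nbhs x P -> nbhs x Q -> nbhs x (P `&` Q).
Proof. exact: (@filterI _ _ (nbhs_filter x)). Qed.
Lemma nbhsT {T : topologicalType} (x : T) : nbhs x setT.
Proof. exact: (@filterT _ _ (nbhs_filter x)). Qed.

Lemma fst_cont {A B : topologicalType} : continuous (@fst A B).
Proof. by move=> [a b]; exact: cvg_fst. Qed.
Lemma snd_cont {A B : topologicalType} : continuous (@snd A B).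
Proof. by move=> [a b]; exact: cvg_snd. Qed.
Lemma pair_cont {T A B : topologicalType} (f : T -> A) (g : T -> B) x :
  {for x, continuous f} -> {for x, continuous g} ->
  {for x, continuous (fun t => (f t, g t))}.
Proof. by move=> hf hg; apply: cvg_pair. Qed.
Lemma comp_cont {T A B : topologicalType} (f : T -> A) (g : A -> B) x :
  {for x, continuous f} -> {for (f x), continuous g} ->
  {for x, continuous (fun t => g (f t))}.
Proof. by move=> hf hg; exact: (continuous_comp hf hg). Qed.

Lemma cont_initial_at {X Z : topologicalType} (A : set Z) (f : X -> set_type A) x :
  {for x, continuous (fun y => \val (f y))} -> {for x, continuous f}.
Proof.
move=> cf U [?/= [[W oW <-]]] /= Wsfz /filterS; apply; apply: cf.
exact: open_nbhs_nbhs.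
Qed.

Lemma nbhs_None (Z : topologicalType) (A : set (optT Z)) :
  nbhs (None : optT Z) A -> A = setT.
Proof.
rewrite nbhsE => -[B [oB BN] BA].
have [BT|[nB _]] := (opt_openP B).1 oB; last by [].
by apply/seteqP; split => // y _; apply: BA; rewrite BT.
Qed.

Definition Zty (K : nat) (T : topologicalType) : topologicalType :=
  ((RR * 'rV[RR]_K) * T)%type.
Definition scaleZ {K : nat} {T : topologicalType} (r : RR) (z : Zty K T) : Zty K T :=
  ((r * z.1.1, z.1.2), z.2).
Definition scaleY {K : nat} {T : topologicalType} (r : RR) (y : optT (Zty K T)) :
  optT (Zty K T) := omap (scaleZ r) y.

Lemma scaleZ_cont2 (K : nat) (T : topologicalType) :
  continuous (fun q : RR * Zty K T => scaleZ q.1 q.2).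
Proof.
move=> q; rewrite /scaleZ.
apply: (@pair_cont _ (RR * 'rV[RR]_K)%type T
  (fun q : RR * Zty K T => (q.1 * q.2.1.1, q.2.1.2)) (fun q : RR * Zty K T => q.2.2)); last first.
  apply: (comp_cont snd (@snd _ T)); [exact: snd_cont|exact: snd_cont].
apply: (@pair_cont _ RR 'rV[RR]_K
  (fun q : RR * Zty K T => q.1 * q.2.1.1) (fun q : RR * Zty K T => q.2.1.2)); last first.
  apply: (comp_cont (fun q : RR * Zty K T => q.2.1) snd).
    apply: (comp_cont snd fst); [exact: snd_cont|exact: fst_cont].
  exact: snd_cont.
have h1 : (fun q : RR * Zty K T => q.1) @ q --> q.1 by exact: fst_cont.
have h2 : (fun q : RR * Zty K T => q.2.1.1) @ q --> q.2.1.1.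
  apply: (comp_cont (fun q : RR * Zty K T => q.2.1) fst).
    apply: (comp_cont snd fst); [exact: snd_cont|exact: fst_cont].
  exact: fst_cont.
apply: (cvgM h1 h2).
Qed.

Lemma Some_open (Z : topologicalType) (W : set Z) :
  open W -> open [set y : optT Z | exists2 z, y = Some z & W z].
Proof.
move=> oW; apply/opt_openP; right; split; first by case.
congr open: oW; apply/seteqP; split => z /=; first by move=> Wz; exists z.
by case=> z' [->].
Qed.

Lemma scaleY_cont2 (K : nat) (T : topologicalType) :
  continuous (fun q : RR * optT (Zty K T) => scaleY q.1 q.2).
Proof.
move=> [r0 [z0|]] A /=; last first.
  by move/nbhs_None => ->; exact: filterT.
rewrite nbhsE => -[B [oB Bq] BA].
have [BT|[nB oVB]] := (opt_openP B).1 oB.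
  have AT : A = setT by apply/seteqP; split => // y _; apply: BA; rewrite BT.
  rewrite AT; exact: filterT.
have h : nbhs (r0, z0) ((fun q : RR * Zty K T => scaleZ q.1 q.2) @^-1`
   [set z : Zty K T | B (Some z)]).
  apply: scaleZ_cont2; apply: open_nbhs_nbhs; split => //.
case: h => -[P1 P2] /= [h1 h2] hsub.
move: h2; rewrite nbhsE => -[W [oW Wz0] WP2].
rewrite /nbhs /= /filter_prod /filter_from /=.
exists (P1, [set y : optT (Zty K T) | exists2 z, y = Some z & W z]).
  split => //=; apply: open_nbhs_nbhs; split; first exact: Some_open.
  by exists z0.
move=> [r y] /= [P1r [z -> Wz]]; apply: BA.
exact: (hsub (r, z) (conj P1r (WP2 _ Wz))).
Qed.

Lemma sqnormZ (n : nat) (c : RR) (v : 'rV[RR]_n) :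
  sqnorm (c *: v) = c ^+ 2 * sqnorm v.
Proof.
rewrite /sqnorm mulr_sumr; apply: eq_bigr => i _; by rewrite mxE exprMn.
Qed.
Lemma sqnorm_ge0 (n : nat) (v : 'rV[RR]_n) : 0 <= sqnorm v.
Proof. by apply: sumr_ge0 => i _; exact: sqr_ge0. Qed.

Definition nrm {n : nat} (v : 'rV[RR]_n) : 'rV[RR]_n :=
  (Num.sqrt (sqnorm v))^-1 *: v.
Lemma sqnorm_nrm {n : nat} {v : 'rV[RR]_n} : 0 < sqnorm v -> sqnorm (nrm v) = 1.
Proof.
move=> h; rewrite /nrm sqnormZ exprVn sqr_sqrtr; last exact: ltW.
by rewrite mulVf // gt_eqF.
Qed.

Definition sph {k : nat} (v : Disk k) (hv : 0 < sqnorm (\val v)) : Sphere k :=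
  SigSub (mem_set (sqnorm_nrm hv : sphere_set (nrm (\val v)))).

Lemma val_cont (Z : topologicalType) (A : set Z) : continuous (fun x : set_type A => \val x).
Proof. exact: (@initial_continuous _ _ (@set_val _ A)). Qed.

Lemma nrm_cont_at {n : nat} (v : 'rV[RR]_n) : 0 < sqnorm v -> {for v, continuous (@nrm n)}.
Proof.
move=> hv; rewrite /nrm.
have hs : {for v, continuous (fun w : 'rV[RR]_n => Num.sqrt (sqnorm w))}.
  apply: (comp_cont (@sqnorm n) Num.sqrt); first exact: sqnorm_cont.
  exact: sqrt_continuous.
have hid : (fun w : 'rV[RR]_n => w) @ v --> v by exact: cvg_id.
apply: (cvgZ _ hid); apply: cvgV; last exact: hs.
by rewrite gt_eqF // sqrtr_gt0.
Qed.

Section Ext.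
Variables (K k : nat) (Tc To : topologicalType).
Local Notation Yt := (optT (Zty K To)).

Definition extH (Gs : Sphere k -> Tc -> Yt) (p : Disk k * Tc) : Yt :=
  match pselect (0 < sqnorm (\val p.1)) with
  | left hv => scaleY (Num.sqrt (sqnorm (\val p.1))) (Gs (sph p.1 hv) p.2)
  | right _ => None end.

Lemma extH_eq (Gs : Sphere k -> Tc -> Yt) p (h : 0 < sqnorm (\val p.1)) :
  extH Gs p = scaleY (Num.sqrt (sqnorm (\val p.1))) (Gs (sph p.1 h) p.2).
Proof.
rewrite /extH; case: pselect => [h'|n]; last by exfalso.
by rewrite (Prop_irrelevance h' h).
Qed.

Lemma extH_None (Gs : Sphere k -> Tc -> Yt) p :
  ~ (0 < sqnorm (\val p.1)) -> extH Gs p = None.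
Proof. by rewrite /extH; case: pselect. Qed.

Lemma pos_nbhs (v0 : Disk k) : 0 < sqnorm (\val v0) ->
  nbhs v0 [set v : Disk k | 0 < sqnorm (\val v)].
Proof.
move=> hv0.
have c : {for v0, continuous (fun v : Disk k => sqnorm (\val v))}.
  apply: (comp_cont (fun v : Disk k => \val v) (@sqnorm k)); first exact: val_cont.
  exact: sqnorm_cont.
apply: (c [set x : RR | 0 < x]); apply: open_nbhs_nbhs; split => //; exact: open_gt.
Qed.

Lemma extH_cont (Gs : Sphere k -> Tc -> Yt) :
  continuous (fun q : Sphere k * Tc => Gs q.1 q.2) -> continuous (extH Gs).
Proof.
move=> gc; apply/continuousP => A oA.
have [AT|[nA _]] := (opt_openP A).1 oA.
  rewrite AT preimage_setT; exact: openT.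
rewrite openE => -[v0 o0] /= E0.
have hv0 : 0 < sqnorm (\val v0).
  apply/negPn/negP => hn; apply: nA; rewrite -(extH_None Gs (v0, o0)) //.
  by move/negP: hn.
pose N (v : Disk k) : Sphere k :=
  match pselect (0 < sqnorm (\val v)) with
  | left h => sph v h | right _ => sph v0 hv0 end.
have NE : forall v (h : 0 < sqnorm (\val v)), N v = sph v h.
  move=> v h; rewrite /N; case: pselect => [h'|n]; last by exfalso.
  by rewrite (Prop_irrelevance h' h).
pose M (p : Disk k * Tc) := scaleY (Num.sqrt (sqnorm (\val p.1))) (Gs (N p.1) p.2).
have Ncont : {for v0, continuous N}.
  apply: cont_initial_at.
  have h1 : (fun v : Disk k => \val (N v)) @ v0 `=>` (fun v : Disk k => nrm (\val v)) @ v0.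
    apply: near_eq_cvg; first exact: (nbhs_filter v0).
    have P1 : nbhs v0 [set v : Disk k | nrm (\val v) = \val (N v)].
      apply: (nbhsW (pos_nbhs v0 hv0)) => v hv /=.
      by rewrite (NE v hv).
    exact: P1.
  have h2 : (fun v : Disk k => nrm (\val v)) @ v0 --> nrm (\val v0).
    apply: (comp_cont (fun v : Disk k => \val v) nrm); first exact: val_cont.
    exact: nrm_cont_at.
  have e : \val (N v0) = nrm (\val v0) by rewrite (NE v0 hv0).
  rewrite -e in h2; exact: (cvg_trans h1 h2).
have Mcont : {for (v0, o0), continuous M}.
  apply: (comp_cont (fun p : Disk k * Tc =>
      (Num.sqrt (sqnorm (\val p.1)), Gs (N p.1) p.2))
    (fun q : RR * Yt => scaleY q.1 q.2)); last exact: scaleY_cont2.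
  apply: pair_cont.
    apply: (comp_cont fst (fun v : Disk k => Num.sqrt (sqnorm (\val v))));
      first exact: fst_cont.
    apply: (comp_cont (fun v : Disk k => sqnorm (\val v)) Num.sqrt);
      last exact: sqrt_continuous.
    apply: (comp_cont (fun v : Disk k => \val v) (@sqnorm k)); first exact: val_cont.
    exact: sqnorm_cont.
  apply: (comp_cont (fun p : Disk k * Tc => (N p.1, p.2))
     (fun q : Sphere k * Tc => Gs q.1 q.2)); last exact: gc.
  apply: pair_cont; last exact: snd_cont.
  apply: (comp_cont fst N); [exact: fst_cont | exact: Ncont].
have MA : nbhs (v0, o0) (M @^-1` A).
  apply: Mcont; apply: open_nbhs_nbhs; split => //=.
  by rewrite /M /= (NE v0 hv0) -(extH_eq Gs (v0, o0)).
have UA : nbhs ((v0, o0) : Disk k * Tc) [set p : Disk k * Tc | 0 < sqnorm (\val p.1)].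
  exists ([set v : Disk k | 0 < sqnorm (\val v)], setT) => /=.
    split; [exact: pos_nbhs | exact: nbhsT].
  by move=> [v o] [] /=.
apply: (nbhsW (nbhsI MA UA)) => -[v o] /= [Mp hp].
by rewrite (extH_eq Gs (v, o) hp) -(NE v hp).
Qed.
End Ext.


Lemma dmap_contP {D : Cat} {X Y : DSpace D} (f : DMap X Y) a : continuous (f a).
Proof. exact: dmap_cont. Qed.

Definition dcomp {D : Cat} {X Y Z : DSpace D} (f : DMap X Y) (g : DMap Y Z) : DMap X Z.
Proof.
refine (@Build_DMap D X Z (fun a x => g a (f a x)) _ _).
- move=> a x; apply: (comp_cont (f a) (g a)); [exact: dmap_contP|exact: dmap_contP].
- by move=> a b h x; rewrite !natD.
Defined.

Section Y.
Variables (D : Cat) (K : nat) (O0 : DSpace D).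
Definition Yact (a b : D) (f : Hom a b) (y : optT (Zty K (O0 a))) : optT (Zty K (O0 b)) :=
  omap (fun z : Zty K (O0 a) => ((z.1, dact O0 f z.2) : Zty K (O0 b))) y.
Lemma Yact_cont a b f : continuous (Yact a b f).
Proof.
apply: omap_cont; apply: (@pair_map_cont (RR * 'rV[RR]_K)%type (O0 a) (O0 b)).
exact: dact_cont.
Qed.
Lemma Yact_id a y : Yact a a (cid a) y = y.
Proof. by case: y => [[p o]|] //=; rewrite actid. Qed.
Lemma Yact_comp a b c (g : Hom b c) (f : Hom a b) y :
  Yact a c (ccomp g f) y = Yact b c g (Yact a b f y).
Proof. by case: y => [[p o]|] //=; rewrite actcomp. Qed.
Definition YDS : DSpace D :=
  @Build_DSpace D (fun a => optT (Zty K (O0 a)) : topologicalType) Yact Yact_cont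
    Yact_id Yact_comp.

Lemma Yact_scale a b f r y : Yact a b f (scaleY r y) = scaleY r (Yact a b f y).
Proof. by case: y => [[p o]|]. Qed.

Definition baseF (a : D) (p : Disk K * O0 a) : optT (Zty K (O0 a)) :=
  match pselect (sqnorm (\val p.1) < 1) with
  | left _ => Some ((1, \val p.1), p.2)
  | right _ => None end.

Lemma baseF_cont a : continuous (baseF a).
Proof.
apply: opt_contP => V oV.
have -> : [set s : Disk K * O0 a | exists2 z, baseF a s = Some z & V z] =
  [set s | sqnorm (\val s.1) < 1] `&`
  (fun s : Disk K * O0 a => (((1 : RR), \val s.1), s.2) : Zty K (O0 a)) @^-1` V.
  apply/seteqP; split => -[v o] /=; rewrite /baseF /=.
    case: pselect => // h [z e Vz]; split => //; by case: e => ->.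
  by case=> h Vz; case: pselect => // _; exists ((1, \val v), o).
apply: openI.
  have c : continuous (fun s : Disk K * O0 a => sqnorm (\val s.1)).
    move=> s; apply: (comp_cont (fun s : Disk K * O0 a => \val s.1) (@sqnorm K)); last exact: sqnorm_cont.
    apply: (comp_cont fst (fun v : Disk K => \val v)); [exact: fst_cont | exact: val_cont].
  move/continuousP: c => c; exact: (c _ (@open_lt _ 1)).
have c : continuous (fun s : Disk K * O0 a => (((1 : RR), \val s.1), s.2) : Zty K (O0 a)).
  move=> s; apply: pair_cont; last exact: snd_cont.
  apply: pair_cont; first exact: cst_continuous.
  apply: (comp_cont fst (fun v : Disk K => \val v)); [exact: fst_cont | exact: val_cont].
by move/continuousP: c; apply.
Qed.

Definition baseM : DMap (prodDSpace (Disk K) O0) YDS.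
Proof.
refine (@Build_DMap D (prodDSpace (Disk K) O0) YDS baseF baseF_cont _).
move=> a b f [v o]; rewrite /baseF /=.
by case: pselect.
Defined.
End Y.

Section Stage.
Variables (D : Cat) (F : DSpace D -> Prop) (X : DCellComplex F).
Local Notation L := (cc_ord X).
Local Notation sp n := (@cc_sp D F X n).
Local Notation iota h := (@cc_map D F X _ _ h).
Local Notation cd := (cd D F X).
Local Notation cj' c := (cj D F X _ _ c).
Local Notation cphi' c := (cphi D F X _ _ c).
Local Notation cO' c := (cO D F X _ _ c).
Local Notation ck' c := (ck D F X _ _ c).
Local Notation cPO' c := (cPO D F X _ _ c).

Definition hsle {nu nu1 : L} (hs : ois_succ nu nu1) : ole nu nu1 := or_introl (proj1 hs).

Lemma stage_ind (n : L) (Q : forall b, sp n b -> Prop) :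
  (forall nu nu1 (hs : ois_succ nu nu1) (h : ole nu1 n) b v o, inner v ->
     (forall b' z, Q b' (iota (ole_trans L _ _ _ (hsle hs) h) b' z)) ->
     Q b (iota h b (cj' (cd nu nu1 hs) b (v, o)))) ->
  forall b y, Q b y.
Proof.
move=> H.
suff S : forall m (hm : ole m n) b z, Q b (iota hm b z).
  by move=> b y; have := S n (ole_refl L n) b y; rewrite iota_id.
elim/(well_founded_ind (@olt_wf L)) => m IH hm b z.
have [nu [nu1 [hs [h' [v [o [iv ->]]]]]]] := decomp D F X m b z.
rewrite (iota_comp D F X _ _ _ h' hm (ole_trans L _ _ _ h' hm)).
apply: H => // b' z'.
have hlt : olt nu m := olt_ole_trans L _ _ _ (proj1 hs) h'.
exact: (IH nu hlt _ b' z').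
Qed.
End Stage.

Lemma extH_ext (K k : nat) (Tc To : topologicalType) (Gs Gs' : Sphere k -> Tc -> optT (Zty K To)) p :
  (forall s o, Gs s o = Gs' s o) -> extH K k Tc To Gs p = extH K k Tc To Gs' p.
Proof. by move=> e; rewrite /extH; case: pselect => // h; rewrite e. Qed.

Lemma extH_allNone (K k : nat) (Tc To : topologicalType) (Gs : Sphere k -> Tc -> optT (Zty K To)) p :
  (forall s o, Gs s o = None) -> extH K k Tc To Gs p = None.
Proof. by move=> e; rewrite /extH; case: pselect => // h; rewrite e. Qed.

Section Good.
Variables (D : Cat) (F : DSpace D -> Prop) (X : DCellComplex F).
Local Notation L := (cc_ord X).
Local Notation sp n := (@cc_sp D F X n).
Local Notation iota h := (@cc_map D F X _ _ h).
Local Notation cd := (cd D F X).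
Local Notation cj' c := (cj D F X _ _ c).
Local Notation cphi' c := (cphi D F X _ _ c).
Local Notation cO' c := (cO D F X _ _ c).
Local Notation ck' c := (ck D F X _ _ c).
Local Notation cPO' c := (cPO D F X _ _ c).
Variables (mu mu1 : L) (hsmu : ois_succ mu mu1).
Local Notation c0 := (cd mu mu1 hsmu).
Local Notation K := (ck' c0).
Local Notation O0 := (cO' c0).
Local Notation Y := (YDS D K O0).

Definition Good (n : L) (G : DMap (sp n) Y) : Prop :=
  (forall (h : ole mu1 n) b v o,
     G b (iota h b (cj' c0 b (v, o))) = baseF D K O0 b (v, o)) /\
  (forall nu nu1 (hs : ois_succ nu nu1) (h : ole nu1 n), nu1 <> mu1 -> forall b v o,
     G b (iota h b (cj' (cd nu nu1 hs) b (v, o))) =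
     extH K _ _ _ (fun s o' => G b (iota (ole_trans L _ _ _ (hsle D F X hs) h) b
                                    (cphi' (cd nu nu1 hs) b (s, o')))) (v, o)).

Lemma Good_restrict (m n : L) (h : ole m n) (G : DMap (sp n) Y) :
  Good n G -> Good m (dcomp (iota h) G).
Proof.
move=> [GB GG]; split.
  move=> h' b v o /=; rewrite (iota_comp D F X _ _ _ h' h (ole_trans L _ _ _ h' h)).
  exact: GB.
move=> nu nu1 hs h' ne b v o /=.
rewrite (iota_comp D F X _ _ _ h' h (ole_trans L _ _ _ h' h)) GG //.
apply: extH_ext => s o' /=.
by rewrite (iota_comp D F X _ _ _ _ _ (ole_trans L _ _ _ (hsle D F X hs) (ole_trans L _ _ _ h' h))).
Qed.

Lemma Good_uniq (n : L) (G G' : DMap (sp n) Y) :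
  Good n G -> Good n G' -> forall b y, G b y = G' b y.
Proof.
move=> [GB GG] [GB' GG'].
apply: stage_ind => nu nu1 hs h b v o iv IH.
case: (pselect (nu1 = mu1)) => e.
  subst nu1; have e2 := succ_pred_uniq L _ _ _ hs hsmu; subst nu.
  have e3 := Prop_irrelevance hs hsmu; subst hs.
  by rewrite GB GB'.
rewrite GG // GG' //; apply: extH_ext => s o'; exact: IH.
Qed.

Lemma Good_None (n : L) (G : DMap (sp n) Y) :
  Good n G -> ~ ole mu1 n -> forall b y, G b y = None.
Proof.
move=> [GB GG] nle.
apply: stage_ind => nu nu1 hs h b v o iv IH.
have ne : nu1 <> mu1 by move=> e; subst nu1; exact: nle h.
rewrite GG //; apply: extH_allNone => s o'; exact: IH.
Qed.

Lemma factor (m n : L) (h0 : ole m n) (w : DMap (sp n) Y) (Gm : DMap (sp m) Y) :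
  (forall a x, w a (iota h0 a x) = Gm a x) ->
  forall l (hl : ole l m) (hl' : ole l n) b z, w b (iota hl' b z) = Gm b (iota hl b z).
Proof. by move=> H l hl hl' b z; rewrite -(iota_comp D F X _ _ _ hl h0 hl'); exact: H. Qed.

Definition emptyMap (n : L) (hz : ois_zero n) : DMap (sp n) Y.
Proof.
refine (@Build_DMap D (sp n) Y (fun a x => False_rect _ (cc_zero hz x)) _ _).
- move=> a x; exfalso; exact: (cc_zero hz x).
- move=> a b f x; exfalso; exact: (cc_zero hz x).
Defined.

Lemma sph_incl (k : nat) (s : Sphere k) (h : 0 < sqnorm (\val (sphere_incl s))) :
  sph (sphere_incl s) h = s.
Proof.
case: s h => x hx h; apply: sig_eq => /=.
have e : sqnorm x = 1 := set_mem hx.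
by rewrite /nrm e sqrtr1 invr1 scale1r.
Qed.

Lemma scaleY1 (k : nat) (T : topologicalType) (y : optT (Zty k T)) : scaleY 1 y = y.
Proof. by case: y => [[[t d] o]|] //=; rewrite /scaleZ /= mul1r. Qed.

Lemma sqnorm_incl (k : nat) (s : Sphere k) : sqnorm (\val (sphere_incl s)) = 1.
Proof. by case: s => x hx /=; exact: set_mem hx. Qed.

Definition extMap (m n : L) (c : celldata D F X m n) (Gm : DMap (sp m) Y) :
  DMap (prodDSpace (Disk (ck' c)) (cO' c)) Y.
Proof.
refine (@Build_DMap D (prodDSpace (Disk (ck' c)) (cO' c)) Y
  (fun a p => extH K (ck' c) (cO' c a) (O0 a) (fun s o' => Gm a (cphi' c a (s, o'))) p) _ _).
- move=> a; apply: extH_cont => q.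
  apply: (comp_cont (fun q => cphi' c a (q.1, q.2)) (Gm a)); last exact: dmap_contP.
  have -> : (fun q : Sphere (ck' c) * cO' c a => cphi' c a (q.1, q.2)) = cphi' c a.
    by apply: funext => -[s o].
  exact: dmap_contP.
- move=> a b f [v o]; rewrite /extH /=.
  case: pselect => h //=; rewrite Yact_scale; congr scaleY.
  have := natD (cphi' c) f (sph v h, o); rewrite /= => ->.
  by rewrite natD.
Defined.

Lemma Good_ex (n : L) : exists G : DMap (sp n) Y, Good n G.
Proof.
elim/(well_founded_ind (@olt_wf L)): n => n IH.
have [hz|[[m hs]|hl]] := trichotomy L n.
- exists (emptyMap n hz); split.
    by move=> h b v o; exfalso; exact: (cc_zero hz (iota h b (cj' c0 b (v, o)))).
  by move=> nu nu1 hs h _ b v o; exfalso; exact: (cc_zero hz (iota h b (cj' (cd nu nu1 hs) b (v, o)))).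
- have [Gm [GmB GmG]] := IH m (proj1 hs).
  have h0 : ole m n := hsle D F X hs.
  case: (pselect (n = mu1)) => e.
  + subst n; have e2 := succ_pred_uniq L _ _ _ hs hsmu; subst m.
    have e3 := Prop_irrelevance hs hsmu; subst hs.
    have GN := Good_None mu Gm (conj GmB GmG) (olt_nle L _ _ (proj1 hsmu)).
    have compat : forall a x, Gm a (cphi' c0 a x) = baseM D K O0 a (cell_incl K O0 a x).
      move=> a [s o]; rewrite GN /= /baseF /=; case: pselect => //.
      by rewrite sqnorm_incl ltxx.
    have [w [wu [wv _]]] := (cPO' c0 h0).2 Y Gm (baseM D K O0) compat.
    exists w; split.
      by move=> h b v o; rewrite iota_id wv.
    move=> nu nu1 hs h ne b v o.
    have hlt : olt nu1 mu1 by case: h => // e'; exfalso; exact: ne e'.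
    have h'' := succ_le L _ _ _ hsmu hlt.
    rewrite (factor _ _ h0 w Gm wu _ h'') GmG //.
    apply: extH_ext => s o'; symmetry; exact: (factor _ _ h0 w Gm wu).
  + pose c := cd m n hs.
    have compat : forall a x, Gm a (cphi' c a x) = extMap m n c Gm a (cell_incl (ck' c) (cO' c) a x).
      move=> a [s o] /=.
      have hpos : 0 < sqnorm (\val (sphere_incl s)) by rewrite sqnorm_incl ltr01.
      rewrite (extH_eq _ _ _ _ _ (sphere_incl s, o) hpos) /= sph_incl sqnorm_incl sqrtr1.
      by rewrite scaleY1.
    have [w [wu [wv _]]] := (cPO' c h0).2 Y Gm (extMap m n c Gm) compat.
    exists w; split.
      move=> h b v o.
      have hlt : olt mu1 n by case: h => // e'; exfalso; exact: e (esym e').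
      have h'' := succ_le L _ _ _ hs hlt.
      by rewrite (factor _ _ h0 w Gm wu _ h'') GmB.
    move=> nu nu1 hs' h ne b v o.
    case: (pselect (nu1 = n)) => e1.
      subst nu1; have e2 := succ_pred_uniq L _ _ _ hs' hs; subst nu.
      have e3 := Prop_irrelevance hs' hs; subst hs'.
      rewrite iota_id wv /=; apply: extH_ext => s o'.
      rewrite (factor _ _ h0 w Gm wu _ (ole_refl L m)); by rewrite iota_id.
    have hlt : olt nu1 n by case: h => // e'; exfalso; exact: e1 e'.
    have h'' := succ_le L _ _ _ hs hlt.
    rewrite (factor _ _ h0 w Gm wu _ h'') GmG //.
    apply: extH_ext => s o'; symmetry; exact: (factor _ _ h0 w Gm wu).
- pose g (m : L) (hm : olt m n) : DMap (sp m) Y := proj1_sig (boolp.cid (IH m hm)).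
  have gG : forall m hm, Good m (g m hm) := fun m hm => proj2_sig (boolp.cid (IH m hm)).
  have gc : forall (m m' : L) (hm : olt m n) (hm' : olt m' n) (h : ole m m'),
      dcommutes (iota h) (g m' hm') (g m hm).
    move=> m m' hm hm' h a x.
    exact: (Good_uniq m (dcomp (iota h) (g m' hm')) (g m hm)
      (Good_restrict m m' h _ (gG m' hm')) (gG m hm) a x).
  have [w [wc _]] := cc_limit hl gc.
  have lt_n : forall nu nu1 (hs : ois_succ nu nu1), ole nu1 n -> olt nu1 n.
    move=> nu nu1 hs [//|e]; subst nu1; exfalso; exact: (proj2 hl nu hs).
  exists w; split.
    move=> h b v o.
    have hm := lt_n _ _ hsmu h.
    have [GB _] := gG mu1 hm.
    by rewrite (wc mu1 hm h) -(GB (ole_refl L mu1)) iota_id.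
  move=> nu nu1 hs h ne b v o.
  have hm := lt_n _ _ hs h.
  have [_ GG] := gG nu1 hm.
  rewrite (wc nu1 hm h).
  have := GG nu nu1 hs (ole_refl L nu1) ne b v o; rewrite iota_id => ->.
  apply: extH_ext => s o'; symmetry; exact: (factor _ _ h w (g nu1 hm) (wc nu1 hm h)).
Qed.

Lemma Good_inv (n : L) (G : DMap (sp n) Y) : Good n G ->
  forall b y t d o, G b y = Some ((t, d), o) ->
  [/\ 0 < t, t <= 1 & (t = 1 -> exists (h : ole mu1 n) (v : Disk K),
      [/\ \val v = d, inner v & y = iota h b (cj' c0 b (v, o))])].
Proof.
move=> [GB GG].
apply: stage_ind => nu nu1 hs h b v o iv IH t d o1.
case: (pselect (nu1 = mu1)) => e.
  subst nu1; have e2 := succ_pred_uniq L _ _ _ hs hsmu; subst nu.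
  have e3 := Prop_irrelevance hs hsmu; subst hs.
  rewrite GB /baseF /=; case: pselect => // _ [<- <- <-].
  split => // _; exists h, v; split => //.
rewrite GG // /extH /=; case: pselect => // hp.
set z := iota _ b _.
case E : (G b z) => [[[t1 d1] o2]|] //= [<- <- <-].
have [t1p t1le _] := IH b _ t1 d1 o2 E.
have s0 : 0 < Num.sqrt (sqnorm (\val v)) by rewrite sqrtr_gt0.
have s1 : Num.sqrt (sqnorm (\val v)) < 1.
  by rewrite -sqrtr1 ltr_sqrt // ltr01.
have tlt : Num.sqrt (sqnorm (\val v)) * t1 < 1.
  apply: (le_lt_trans _ s1); rewrite -[leRHS]mulr1; apply: ler_wpM2l => //.
  exact: ltW.
split.
- exact: mulr_gt0.
- exact: ltW.
- by move=> e1; exfalso; move: tlt; rewrite e1 ltxx.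
Qed.
End Good.

Definition idMap {D : Cat} (X : DSpace D) : DMap X X.
Proof.
refine (@Build_DMap D X X (fun a x => x) _ _).
- by move=> a x; exact: cvg_id.
- by [].
Defined.

Theorem proposition6p6 (D : Cat) (F : DSpace D -> Prop)
  (HF : forall O, F O -> DOrbit O) (X : DCellComplex F) :
  DSpace_of_type F (cc_space X).
Proof.
move=> C c hc x P p [pin puniv].
pose lam := otop (cc_ord X).
have [a0 [y0 ex]] := colim_surj D _ C c hc x.
have [mu [mu1 [hsmu [h1 [v0 [o0 [iv0 ey0]]]]]]] := decomp D F X lam a0 y0.
pose c0 := cd D F X mu mu1 hsmu.
pose K := ck D F X _ _ c0.
pose O0 := cO D F X _ _ c0.
pose cellpt (b : D) (o : O0 b) : cc_space X b :=
  cc_map h1 b (cj D F X _ _ c0 b (v0, o)).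
have [G GG] := Good_ex D F X mu mu1 hsmu lam.
have Gcell : forall b o, G b (cellpt b o) = Some ((1, \val v0), o).
  move=> b o; rewrite /cellpt (proj1 GG) /baseF /=.
  by case: pselect.
have cell_inj : forall b o o', cellpt b o = cellpt b o' -> o = o'.
  by move=> b o o' e; have := Gcell b o; rewrite e Gcell => -[].
have cell_nat : forall a b (f : Hom a b) o,
    dact (cc_space X) f (cellpt a o) = cellpt b (dact O0 f o).
  move=> a b f o; rewrite /cellpt -natD.
  by rewrite -(natD (cj D F X _ _ c0) f (v0, o)).
have cell_cont : forall b, continuous (cellpt b).
  move=> b o; rewrite /cellpt.
  apply: (comp_cont (fun o : O0 b => cj D F X _ _ c0 b (v0, o)) (cc_map h1 b));
    last exact: dmap_contP.
  apply: (comp_cont (fun o : O0 b => (v0, o)) (cj D F X _ _ c0 b)); last exact: dmap_contP.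
  apply: pair_cont; [exact: cst_continuous | exact: cvg_id].
have cellc : forall b o, c b (cellpt b o) = x.
  have [C' [c' [hc' [pt hpt]]]] := HF O0 (cF D F X _ _ c0).
  have [cc [ccomp _]] := hc.
  have [_ [_ univ']] := hc'.
  have kc : forall b, continuous (fun o : O0 b => c b (cellpt b o)).
    move=> b o; apply: (comp_cont (cellpt b) (c b)); [exact: cell_cont | exact: cc].
  have kcomp : forall a b (f : Hom a b) o,
      c b (cellpt b (dact O0 f o)) = c a (cellpt a o).
    by move=> a b f o; rewrite -cell_nat; exact: ccomp.
  have [hk [_ [hkc _]]] := univ' C (fun b o => c b (cellpt b o)) kc kcomp.
  move=> b o; rewrite -(hkc b o) (hpt (c' b o)) -(hpt (c' a0 o0)) hkc.
  by rewrite /cellpt -ey0 ex.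
have [cc [ccomp univc]] := hc.
have fiber : forall b z, c b z = x -> exists o, z = cellpt b o.
  move=> b z czx.
  pose T := indisc (option (RR * 'rV[RR]_K)).
  pose hf (b : D) (z : cc_space X b) : T := omap fst (G b z).
  have hfc : forall a b (f : Hom a b) z, hf b (dact (cc_space X) f z) = hf a z.
    move=> a b' f z'; rewrite /hf natD /=.
    by case: (G a z') => [[q o]|].
  have [hh [_ [hhc _]]] := univc T hf (fun b => @indisc_cont _ _ _) hfc.
  have e1 : hf b z = hf a0 y0 by rewrite -!hhc czx ex.
  have e2 : y0 = cellpt a0 o0 by rewrite ey0.
  move: e1; rewrite e2 /hf Gcell /=.
  case E : (G b z) => [[[t d] o]|] //= [et ed]; subst t d.
  have [_ _ H3] := Good_inv D F X mu mu1 hsmu lam G GG b z 1 (\val v0) o E.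
  have [h [v [ev _ ez]]] := H3 erefl.
  exists o; rewrite ez /cellpt.
  have evv : v = v0 := val_inj ev.
  rewrite evv.
  exact: iota_pi.
pose pi_ (b : D) (y : P b) : O0 b := proj1_sig (boolp.cid (fiber b (p b y) (pin b y))).
have piE : forall b y, p b y = cellpt b (pi_ b y).
  by move=> b y; exact: (proj2_sig (boolp.cid (fiber b (p b y) (pin b y)))).
have pi_nat : forall a b (f : Hom a b) y, pi_ b (dact P f y) = dact O0 f (pi_ a y).
  move=> a b f y; apply: (cell_inj b); rewrite -piE -cell_nat -piE; exact: natD.
have pi_cont : forall b, continuous (pi_ b).
  move=> b; apply/continuousP => U oU.
  have oV : open (@snd (RR * 'rV[RR]_K)%type (O0 b) @^-1` U).
    by move/continuousP: (@snd_cont (RR * 'rV[RR]_K)%type (O0 b)); apply.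
  have oW := Some_open _ _ oV.
  have oGW : open (G b @^-1` [set y : optT (Zty K (O0 b)) | exists2 z, y = Some z &
      (@snd (RR * 'rV[RR]_K)%type (O0 b) @^-1` U) z]).
    by move/continuousP: (dmap_contP G b); apply.
  have oPW : open (p b @^-1` (G b @^-1` [set y : optT (Zty K (O0 b)) | exists2 z, y = Some z &
      (@snd (RR * 'rV[RR]_K)%type (O0 b) @^-1` U) z])).
    by move/continuousP: (dmap_contP p b); apply.
  congr open: oPW; apply/seteqP; split => y /=; rewrite piE Gcell.
    by case=> z [<-].
  by move=> Uy; exists ((1, \val v0), pi_ b y).
pose piM : DMap P O0 := @Build_DMap D P O0 pi_ pi_cont pi_nat.
pose qM : DMap O0 (cc_space X) := @Build_DMap D O0 (cc_space X) cellpt cell_cont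
  (fun a b f o => esym (cell_nat a b f o)).
have [u [pu _]] := puniv O0 qM cellc.
have [u0 [pu0 uniq0]] := puniv P p pin.
exists O0; split; first exact: (cF D F X _ _ c0).
exists piM, u; split.
  move=> b y.
  have e1 := uniq0 (dcomp piM u) (fun a y => eq_trans (pu a (pi_ a y)) (esym (piE a y))).
  have e2 := uniq0 (idMap P) (fun a y => erefl).
  by transitivity (u0 b y); [exact: (e1 b y) | symmetry; exact: (e2 b y)].
move=> b o; apply: (cell_inj b); rewrite -piE; exact: pu.
Qed.
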